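(* Let $\phi:[0,1]\to\mathbb{C}$ be continuous with $\phi(0)=\phi(1)=1$ and $\hat\phi\in\ell^1(\mathbb{Z})$ (regarded as a function on $\mathbb{R}/\mathbb{Z}$). Let $m,\mathfrak{m}\in\mathbb{N}$, $N\ge\mathfrak{m}$, and define for $k\in\mathbb{Z}$ $$\mu(k)=\sum_{l\in k-B_N}\hat\phi(l),\qquad \nu(k)=\sum_{l\notin k-B_N}\hat\phi(l).$$ For $\mathfrak{m}$-Fourier bandlimited $f\in L^2([0,1];\mathbb{C}^m)$ define $$\mathcal{R}_\phi f(x)=\sum_{j=0}^{2N-1}f(j/2N)\,s_N(x-j/2N)\,\phi(x-j/2N),\qquad x\in[0,1],$$ with arguments taken modulo $1$. Then $$\hat f(k)-\widehat{\mathcal{R}_\phi f}(k)=\begin{cases}\hat f(k)\nu(k), & k\in B_{\mathfrak{m}},\\ -\hat f(k-2lN)\mu(k), & \text{if there is } l\ne0 \text{ with } k-2lN\in B_{\mathfrak{m}},\\ 0,&\text{otherwise}.\end{cases}$$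
   Context: $B_N=\{-N,\dots,N-1\}$ and $k-B_N=\{k-b:b\in B_N\}$. $\hat g(k)=\int_0^1 g(x)e^{-i2\pi kx}dx$. $f$ is $\mathfrak{m}$-Fourier bandlimited if $\hat f(k)=0$ for $k\notin B_{\mathfrak{m}}$ (identified with its continuous $1$-periodic representative). $s_N(x)=\frac1{2N}\sum_{k=-N}^{N-1}e^{i2\pi kx}$. *)

(* Defs.v *)
From Stdlib Require Import Reals List ZArith.
From Coquelicot Require Import Coquelicot.
Open Scope R_scope.

Definition cexp2pi (t : R) : C := (cos (2 * PI * t), sin (2 * PI * t)).

Definition zsum (lo : Z) (n : nat) (g : Z -> C) : C :=
  fold_right Cplus (RtoC 0) (map (fun i => g (lo + Z.of_nat i)%Z) (seq 0 n)).

Definition partZ (g : Z -> C) (n : nat) : C := zsum (- Z.of_nat n)%Z (2 * n + 1) g.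
Definition sumZ (g : Z -> C) : C :=
  (real (Lim_seq (fun n => fst (partZ g n))), real (Lim_seq (fun n => snd (partZ g n)))).

Definition ell1 (g : Z -> C) : Prop :=
  exists M : R, forall n : nat,
    fold_right Rplus 0 (map (fun i => Cmod (g (- Z.of_nat n + Z.of_nat i)%Z)) (seq 0 (2 * n + 1))) <= M.

Definition fhat (g : R -> C) (k : Z) : C :=
  @RInt C_R_CompleteNormedModule (fun x => Cmult (g x) (cexp2pi (- IZR k * x))) 0 1.

Definition inB (N : nat) (k : Z) : Prop := (- Z.of_nat N <= k < Z.of_nat N)%Z.

Definition sN (N : nat) (x : R) : C :=
  Cmult (RtoC (/ (2 * INR N))) (zsum (- Z.of_nat N)%Z (2 * N) (fun k => cexp2pi (IZR k * x))).

Definition per (phi : R -> C) (x : R) : C := phi (frac_part x).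

Definition Rphi (N : nat) (phi : R -> C) (f : R -> C) (x : R) : C :=
  zsum 0 (2 * N) (fun j =>
    let t := IZR j / (2 * INR N) in
    Cmult (Cmult (f t) (sN N (x - t))) (per phi (x - t))).

Definition mu (N : nat) (phi : R -> C) (k : Z) : C :=
  zsum (- Z.of_nat N)%Z (2 * N) (fun b => fhat phi (k - b)%Z).
Definition inBb (N : nat) (k : Z) : bool :=
  (Z.leb (- Z.of_nat N) k && Z.ltb k (Z.of_nat N))%bool.
Definition nu (N : nat) (phi : R -> C) (k : Z) : C :=
  sumZ (fun l => if inBb N (k - l)%Z then RtoC 0 else fhat phi l).

(* Main.v *)
Require Import Defs.
From Stdlib Require Import Reals List ZArith Lia Lra.
From Coquelicot Require Import Coquelicot.
Open Scope R_scope.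

Lemma zsum_0 lo g : zsum lo 0 g = RtoC 0.
Proof. reflexivity. Qed.

Lemma zsum_S_l lo n g : zsum lo (S n) g = Cplus (g lo) (zsum (lo+1) n g).
Proof.
  unfold zsum. simpl. rewrite <- seq_shift, map_map. rewrite Z.add_0_r.
  f_equal. f_equal. apply map_ext. intros i. f_equal. lia.
Qed.

Lemma zsum_S_r lo n g : zsum lo (S n) g = Cplus (zsum lo n g) (g (lo + Z.of_nat n)%Z).
Proof.
  revert lo. induction n; intros lo.
  - rewrite zsum_S_l, !zsum_0. simpl. rewrite Z.add_0_r. ring.
  - rewrite zsum_S_l, IHn, zsum_S_l. replace (lo + 1 + Z.of_nat n)%Z with (lo + Z.of_nat (S n))%Z by lia. ring.
Qed.

Lemma zsum_ext lo n g h : (forall i, (lo <= i < lo + Z.of_nat n)%Z -> g i = h i) -> zsum lo n g = zsum lo n h.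
Proof.
  revert lo. induction n; intros lo H. reflexivity.
  rewrite !zsum_S_l. f_equal. apply H; lia. apply IHn. intros; apply H; lia.
Qed.

Lemma zsum_plus lo n g h : zsum lo n (fun i => Cplus (g i) (h i)) = Cplus (zsum lo n g) (zsum lo n h).
Proof. revert lo; induction n; intros lo. simpl. unfold zsum; simpl. ring.
  rewrite !zsum_S_l, IHn. ring. Qed.

Lemma zsum_mult_l lo n c g : zsum lo n (fun i => Cmult c (g i)) = Cmult c (zsum lo n g).
Proof. revert lo; induction n; intros lo. unfold zsum; simpl. ring.
  rewrite !zsum_S_l, IHn. ring. Qed.

Lemma zsum_mult_r lo n c g : zsum lo n (fun i => Cmult (g i) c) = Cmult (zsum lo n g) c.
Proof. revert lo; induction n; intros lo. unfold zsum; simpl. ring.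
  rewrite !zsum_S_l, IHn. ring. Qed.

Lemma zsum_opp lo n g : zsum lo n (fun i => Copp (g i)) = Copp (zsum lo n g).
Proof. revert lo; induction n; intros lo. unfold zsum; simpl. ring.
  rewrite !zsum_S_l, IHn. ring. Qed.

Lemma zsum_zero lo n g : (forall i, (lo <= i < lo + Z.of_nat n)%Z -> g i = RtoC 0) -> zsum lo n g = RtoC 0.
Proof. intros H. rewrite (zsum_ext lo n g (fun _ => RtoC 0)) by auto.
  clear. revert lo; induction n; intros lo. reflexivity. rewrite zsum_S_l, IHn. ring. Qed.

Lemma zsum_split lo n m g : zsum lo (n + m) g = Cplus (zsum lo n g) (zsum (lo + Z.of_nat n) m g).
Proof. revert lo; induction n; intros lo. rewrite Nat.add_0_l, Z.add_0_r, zsum_0. ring.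
  replace (S n + m)%nat with (S (n + m)) by lia. rewrite !zsum_S_l, IHn. replace (lo + 1 + Z.of_nat n)%Z with (lo + Z.of_nat (S n))%Z by lia. ring. Qed.

Lemma zsum_shift lo n c g : zsum lo n (fun i => g (i + c)%Z) = zsum (lo + c) n g.
Proof. revert lo; induction n; intros lo. reflexivity.
  rewrite !zsum_S_l, IHn. f_equal. f_equal. lia. Qed.

Lemma zsum_refl lo n c g : zsum lo n (fun i => g (c - i)%Z) = zsum (c - lo - Z.of_nat n + 1) n g.
Proof. revert lo; induction n; intros lo. reflexivity.
  rewrite zsum_S_l, zsum_S_r, IHn. replace (c - (lo + 1) - Z.of_nat n + 1)%Z with (c - lo - Z.of_nat (S n) + 1)%Z by lia.
  replace (c - lo - Z.of_nat (S n) + 1 + Z.of_nat n)%Z with (c - lo)%Z by lia. ring. Qed.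

Lemma zsum_support lo n lo' n' g :
  (lo <= lo')%Z -> (lo' + Z.of_nat n' <= lo + Z.of_nat n)%Z ->
  (forall i, (lo <= i < lo + Z.of_nat n)%Z -> ~ (lo' <= i < lo' + Z.of_nat n')%Z -> g i = RtoC 0) ->
  zsum lo n g = zsum lo' n' g.
Proof.
  intros H1 H2 H.
  set (a := Z.to_nat (lo' - lo)). set (b := (n - a - n')%nat).
  assert (En : n = (a + (n' + b))%nat) by (unfold b, a; lia).
  rewrite En, zsum_split, zsum_split.
  rewrite (zsum_zero lo a), (zsum_zero _ b).
  replace (lo + Z.of_nat a)%Z with lo' by (unfold a; lia). ring.
  - intros i Hi. apply H. lia. lia.
  - intros i Hi. apply H. lia. lia.
Qed.

Lemma zsum_delta lo n b0 g : (lo <= b0 < lo + Z.of_nat n)%Z ->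
  (forall i, (lo <= i < lo + Z.of_nat n)%Z -> i <> b0 -> g i = RtoC 0) -> zsum lo n g = g b0.
Proof.
  intros Hb H. rewrite (zsum_support lo n b0 1). rewrite zsum_S_l, zsum_0. ring.
  lia. lia. intros i Hi Hn. apply H. lia. lia.
Qed.

Lemma e_add a b : cexp2pi (a + b) = Cmult (cexp2pi a) (cexp2pi b).
Proof. unfold cexp2pi, Cmult; simpl. replace (2*PI*(a+b)) with (2*PI*a + 2*PI*b) by ring.
  rewrite cos_plus, sin_plus. f_equal; ring. Qed.

Lemma e_0 : cexp2pi 0 = RtoC 1.
Proof. unfold cexp2pi. rewrite Rmult_0_r, cos_0, sin_0. reflexivity. Qed.

Lemma e_nat n : cexp2pi (INR n) = RtoC 1.
Proof. unfold cexp2pi. replace (2*PI*INR n) with (0 + 2*INR n*PI) by ring.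
  rewrite cos_period, sin_period, cos_0, sin_0. reflexivity. Qed.

Lemma e_neg x : cexp2pi (- x) = Cconj (cexp2pi x).
Proof. unfold cexp2pi, Cconj; simpl. replace (2*PI*-x) with (-(2*PI*x)) by ring.
  rewrite cos_neg, sin_neg. reflexivity. Qed.

Lemma e_int z : cexp2pi (IZR z) = RtoC 1.
Proof. destruct (Z_le_gt_dec 0 z).
  - replace z with (Z.of_nat (Z.to_nat z)) by lia. rewrite <- INR_IZR_INZ. apply e_nat.
  - replace z with (- Z.of_nat (Z.to_nat (-z)))%Z by lia. rewrite opp_IZR, e_neg, <- INR_IZR_INZ, e_nat.
    unfold Cconj, RtoC; simpl. f_equal. ring.
Qed.

Lemma e_per x z : cexp2pi (x + IZR z) = cexp2pi x.
Proof. rewrite e_add, e_int. ring. Qed.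

Lemma Cmod_e x : Cmod (cexp2pi x) = 1.
Proof. unfold Cmod, cexp2pi; simpl fst; simpl snd. transitivity (sqrt 1); [|apply sqrt_1]. f_equal.
  pose proof (sin2_cos2 (2*PI*x)). unfold Rsqr in H. simpl. lra. Qed.

Lemma e_mult_conj x : Cmult (cexp2pi x) (cexp2pi (-x)) = RtoC 1.
Proof. rewrite <- e_add, Rplus_opp_r. apply e_0. Qed.

Lemma e_eq1 x : cexp2pi x = RtoC 1 -> exists z, x = IZR z.
Proof. intros H. unfold cexp2pi, RtoC in H. injection H as H1 H2.
  replace (2*PI*x) with (2*(PI*x)) in H1 by ring. rewrite cos_2a_sin in H1.
  assert (sin (PI*x) = 0) by nra.
  destruct (sin_eq_0_0 _ H) as [k Hk]. exists k. pose proof PI_RGT_0.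
  apply (Rmult_eq_reg_l PI); [|lra]. rewrite Hk; ring. Qed.

Lemma geom_e n y : Cmult (zsum 0 n (fun j => cexp2pi (IZR j * y))) (Cminus (cexp2pi y) (RtoC 1))
  = Cminus (cexp2pi (INR n * y)) (RtoC 1).
Proof. induction n.
  - rewrite zsum_0. simpl. rewrite Rmult_0_l, e_0. ring.
  - rewrite zsum_S_r. rewrite S_INR.
    replace ((INR n + 1) * y) with (INR n * y + y) by ring. rewrite e_add.
    replace (IZR (0 + Z.of_nat n)) with (INR n) by (rewrite INR_IZR_INZ; f_equal).
    transitivity (Cplus (Cmult (zsum 0 n (fun j : Z => cexp2pi (IZR j * y))) (Cminus (cexp2pi y) (RtoC 1)))
                  (Cmult (cexp2pi (INR n * y)) (Cminus (cexp2pi y) (RtoC 1)))). ring.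
    rewrite IHn. ring.
Qed.

Lemma zsum_const lo n c : zsum lo n (fun _ => c) = Cmult (RtoC (INR n)) c.
Proof. revert lo; induction n; intros lo. rewrite zsum_0. simpl. ring.
  rewrite zsum_S_l, IHn, S_INR. rewrite RtoC_plus. ring. Qed.

Lemma geom_sum (N : nat) (m : Z) : (0 < N)%nat ->
  zsum 0 (2 * N) (fun j => cexp2pi (IZR m * (IZR j / (2 * INR N)))) =
  if Z.eq_dec (m mod (2 * Z.of_nat N)) 0 then RtoC (2 * INR N) else RtoC 0.
Proof.
  intros HN. assert (HN' : 0 < INR N) by (apply lt_0_INR; lia).
  destruct (Z.eq_dec _ _) as [E|E].
  - apply Z.mod_divide in E; [|lia]. destruct E as [q Hq].
    rewrite (zsum_ext _ _ _ (fun _ => RtoC 1)). rewrite zsum_const. rewrite mult_INR. replace (INR 2) with 2 by (simpl; ring). unfold Cmult, RtoC; simpl; f_equal; ring.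
    intros i Hi. rewrite Hq. rewrite mult_IZR, mult_IZR. rewrite <- INR_IZR_INZ.
    replace (IZR q * (2 * INR N) * (IZR i / (2 * INR N))) with (IZR (q * i)) by (rewrite mult_IZR; field; lra).
    apply e_int.
  - set (y := IZR m / (2 * INR N)).
    rewrite (zsum_ext _ _ _ (fun j => cexp2pi (IZR j * y))).
    2:{ intros; unfold y; f_equal; field; lra. }
    pose proof (geom_e (2*N) y) as G.
    replace (INR (2*N) * y) with (IZR m) in G by (unfold y; rewrite mult_INR; simpl; field; lra).
    rewrite e_int in G.
    assert (W : Cminus (cexp2pi y) (RtoC 1) <> RtoC 0).
    { intros W. assert (cexp2pi y = RtoC 1).
      { replace (cexp2pi y) with (Cplus (Cminus (cexp2pi y) (RtoC 1)) (RtoC 1)) by ring. rewrite W. ring. }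
      destruct (e_eq1 _ H) as [z Hz]. apply E. apply Z.mod_divide. lia. exists z.
      apply eq_IZR. rewrite mult_IZR, mult_IZR, <- INR_IZR_INZ. unfold y in Hz.
      rewrite <- Hz. simpl. field. lra. }
    replace (Cminus (RtoC 1) (RtoC 1)) with (RtoC 0) in G by ring.
    apply (Cmult_eq_reg_r _ _ _ W) || idtac.
    destruct (Ceq_dec (zsum 0 (2 * N) (fun j : Z => cexp2pi (IZR j * y))) (RtoC 0)) as [Z0|Z0]; auto.
    exfalso. apply W. replace (Cminus (cexp2pi y) (RtoC 1)) with
      (Cmult (Cinv (zsum 0 (2 * N) (fun j : Z => cexp2pi (IZR j * y))))
        (Cmult (zsum 0 (2 * N) (fun j : Z => cexp2pi (IZR j * y))) (Cminus (cexp2pi y) (RtoC 1)))).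
    rewrite G. ring. field. auto.
Qed.

Lemma cmR (f g : R -> R) x : continuous f x -> continuous g x -> continuous (fun y => f y * g y) x.
Proof. intros. apply (@continuous_mult R_UniformSpace R_AbsRing f g x); auto. Qed.
Lemma cpR (f g : R -> R) x : continuous f x -> continuous g x -> continuous (fun y => f y + g y) x.
Proof. intros. apply (@continuous_plus R_UniformSpace R_AbsRing R_NormedModule f g x); auto. Qed.
Lemma csR (f g : R -> R) x : continuous f x -> continuous g x -> continuous (fun y => f y - g y) x.
Proof. intros. apply (@continuous_minus R_UniformSpace R_AbsRing R_NormedModule f g x); auto. Qed.

Lemma cdR (f : R -> R) x : ex_derive f x -> continuous f x.
Proof. intros. apply (@ex_derive_continuous R_AbsRing R_NormedModule); auto. Qed.

Definition Ccont (f : R -> C) (x : R) : Prop :=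
  continuous (fun y => fst (f y)) x /\ continuous (fun y => snd (f y)) x.

Lemma Ccont_of_cont (f : R -> C) x : continuous f x -> Ccont f x.
Proof. intros H. split.
  - apply (continuous_comp f fst); auto. destruct (f x); apply continuous_fst.
  - apply (continuous_comp f snd); auto. destruct (f x); apply continuous_snd.
Qed.

Lemma Ccont_const (c : C) x : Ccont (fun _ => c) x.
Proof. split; apply continuous_const. Qed.

Lemma Ccont_plus f g x : Ccont f x -> Ccont g x -> Ccont (fun y => Cplus (f y) (g y)) x.
Proof. intros [F1 F2] [G1 G2]. split; simpl.
  - apply cpR; auto.
  - apply cpR; auto. Qed.

Lemma Ccont_mult f g x : Ccont f x -> Ccont g x -> Ccont (fun y => Cmult (f y) (g y)) x.
Proof. intros [F1 F2] [G1 G2]. split; simpl.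
  - apply csR; apply cmR; auto.
  - apply cpR; apply cmR; auto. Qed.

Lemma Ccont_minus f g x : Ccont f x -> Ccont g x -> Ccont (fun y => Cminus (f y) (g y)) x.
Proof. intros [F1 F2] [G1 G2]. split; simpl.
  - apply csR; auto.
  - apply csR; auto. Qed.

Lemma Ccont_e a b x : Ccont (fun y => cexp2pi (a * y + b)) x.
Proof. split; simpl; apply cdR; auto_derive; auto. Qed.

Lemma Ccont_zsum lo n (g : Z -> R -> C) x : (forall i, Ccont (g i) x) -> Ccont (fun y => zsum lo n (fun i => g i y)) x.
Proof. intros H. revert lo; induction n; intros lo.
  - apply Ccont_const.
    assert (E : forall y, zsum lo (S n) (fun i => g i y) = Cplus (g lo y) (zsum (lo+1) n (fun i => g i y)))
      by (intros; apply zsum_S_l).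
    destruct (Ccont_plus _ _ x (H lo) (IHn (lo+1)%Z)) as [A1 A2].
    split; [eapply continuous_ext; [|exact A1] | eapply continuous_ext; [|exact A2]]; intros y; rewrite E; reflexivity.
Qed.

Lemma Ccont_comp_lin f a b x : Ccont f (a * x + b) -> Ccont (fun y => f (a * y + b)) x.
Proof. intros [F1 F2]. assert (L : continuous (fun y => a * y + b) x) by (apply cdR; auto_derive; auto).
  split.
  - apply (continuous_comp (fun y => a*y+b) (fun z => fst (f z))); auto.
  - apply (continuous_comp (fun y => a*y+b) (fun z => snd (f z))); auto. Qed.

Lemma Ccont_scal (r : R -> R) f x : continuous r x -> Ccont f x -> Ccont (fun y => Cmult (RtoC (r y)) (f y)) x.
Proof. intros Hr Hf. apply Ccont_mult; auto. split; simpl; auto. apply continuous_const. Qed.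

Notation CRInt f a b := (@RInt C_R_CompleteNormedModule f a b).

Definition CC (f : R -> C) a b := forall x, Rmin a b <= x <= Rmax a b -> Ccont f x.

Lemma ex_RInt_C f a b : CC f a b -> @ex_RInt C_R_NormedModule f a b.
Proof. intros H. apply (@ex_RInt_fct_extend_pair R_NormedModule R_NormedModule);
  apply (@ex_RInt_continuous R_CompleteNormedModule); intros; apply H; auto. Qed.

Lemma ex_RInt_fst f a b : CC f a b -> ex_RInt (fun x => fst (f x)) a b.
Proof. intros H. apply (@ex_RInt_continuous R_CompleteNormedModule); intros; apply H; auto. Qed.
Lemma ex_RInt_snd f a b : CC f a b -> ex_RInt (fun x => snd (f x)) a b.
Proof. intros H. apply (@ex_RInt_continuous R_CompleteNormedModule); intros; apply H; auto. Qed.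

Lemma CRInt_split f a b : CC f a b ->
  CRInt f a b = (RInt (fun x => fst (f x)) a b, RInt (fun x => snd (f x)) a b).
Proof. intros H. symmetry.
  apply (@RInt_fct_extend_pair R_NormedModule R_NormedModule RInt RInt
     (@is_RInt_unique R_CompleteNormedModule) (@is_RInt_unique R_CompleteNormedModule)).
  apply (@RInt_correct C_R_CompleteNormedModule). apply ex_RInt_C; auto. Qed.

Lemma RInt_lin2 (u v : R -> R) (p q : R) a b : ex_RInt u a b -> ex_RInt v a b ->
  RInt (fun x => p * u x + q * v x) a b = p * RInt u a b + q * RInt v a b.
Proof. intros Hu Hv. apply (@is_RInt_unique R_CompleteNormedModule).
  apply (@is_RInt_plus R_NormedModule (fun x => scal p (u x)) (fun x => scal q (v x)));
  apply (@is_RInt_scal R_NormedModule); apply (@RInt_correct R_CompleteNormedModule); auto. Qed.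

Lemma CC_plus f g a b : CC f a b -> CC g a b -> CC (fun x => Cplus (f x) (g x)) a b.
Proof. intros F G x Hx. apply Ccont_plus; auto. Qed.
Lemma CC_mult f g a b : CC f a b -> CC g a b -> CC (fun x => Cmult (f x) (g x)) a b.
Proof. intros F G x Hx. apply Ccont_mult; auto. Qed.
Lemma CC_minus f g a b : CC f a b -> CC g a b -> CC (fun x => Cminus (f x) (g x)) a b.
Proof. intros F G x Hx. apply Ccont_minus; auto. Qed.
Lemma CC_const c a b : CC (fun _ => c) a b.
Proof. intros x _; apply Ccont_const. Qed.

Lemma CRInt_plus f g a b : CC f a b -> CC g a b ->
  CRInt (fun x => Cplus (f x) (g x)) a b = Cplus (CRInt f a b) (CRInt g a b).
Proof. intros F G. rewrite !CRInt_split; auto. 2: apply CC_plus; auto.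
  unfold Cplus; simpl. f_equal.
  - apply (@RInt_plus R_CompleteNormedModule (fun x => fst (f x)) (fun x => fst (g x))); apply ex_RInt_fst; auto.
  - apply (@RInt_plus R_CompleteNormedModule (fun x => snd (f x)) (fun x => snd (g x))); apply ex_RInt_snd; auto.
Qed.

Lemma RInt_extR (f g : R -> R) a b : (forall x, f x = g x) -> RInt f a b = RInt g a b.
Proof. intros H; apply RInt_ext; intros; apply H. Qed.

Lemma CRInt_ext (f g : R -> C) a b : (forall x, f x = g x) -> CRInt f a b = CRInt g a b.
Proof. intros H; apply RInt_ext; intros; apply H. Qed.

Lemma RInt_lin2m (u v : R -> R) (p q : R) a b : ex_RInt u a b -> ex_RInt v a b ->
  RInt (fun x => p * u x - q * v x) a b = p * RInt u a b - q * RInt v a b.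
Proof. intros Hu Hv. replace (p * RInt u a b - q * RInt v a b) with (p * RInt u a b + (-q) * RInt v a b) by ring.
  rewrite <- RInt_lin2; auto. apply RInt_extR; intros; ring. Qed.

Lemma CRInt_Cmult_l c f a b : CC f a b ->
  CRInt (fun x => Cmult c (f x)) a b = Cmult c (CRInt f a b).
Proof. intros F. rewrite !CRInt_split; auto. 2: intros x Hx; apply Ccont_mult; [apply Ccont_const| auto].
  unfold Cmult; simpl. f_equal.
  - apply RInt_lin2m; [apply ex_RInt_fst|apply ex_RInt_snd]; auto.
  - apply RInt_lin2; [apply ex_RInt_snd|apply ex_RInt_fst]; auto.
Qed.

Lemma CRInt_Cmult_r c f a b : CC f a b ->
  CRInt (fun x => Cmult (f x) c) a b = Cmult (CRInt f a b) c.
Proof. intros F. rewrite (CRInt_ext _ (fun x => Cmult c (f x))). rewrite CRInt_Cmult_l; auto. apply Cmult_comm.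
  intros; ring. Qed.

Lemma RInt_constR (c : R) a b : RInt (fun _ => c) a b = (b - a) * c.
Proof. rewrite RInt_const. reflexivity. Qed.

Lemma CRInt_const c a b : CRInt (fun _ => c) a b = Cmult (RtoC (b - a)) c.
Proof. rewrite CRInt_split by apply CC_const. rewrite !RInt_constR.
  unfold Cmult, RtoC; simpl. f_equal; ring. Qed.

Lemma CC_zsum lo n (g : Z -> R -> C) a b : (forall i, CC (g i) a b) -> CC (fun y => zsum lo n (fun i => g i y)) a b.
Proof. intros H x Hx. apply Ccont_zsum. intros i; apply H; auto. Qed.

Lemma CRInt_zsum lo n (g : Z -> R -> C) a b : (forall i, CC (g i) a b) ->
  CRInt (fun x => zsum lo n (fun i => g i x)) a b = zsum lo n (fun i => CRInt (g i) a b).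
Proof. intros H. revert lo; induction n; intros lo.
  - rewrite zsum_0. rewrite (CRInt_ext _ (fun _ => RtoC 0)) by (intros; reflexivity).
    rewrite CRInt_const. change (@eq C (Cmult (RtoC (b - a)) (RtoC 0)) (RtoC 0)). ring.
  - rewrite zsum_S_l. rewrite (CRInt_ext _ (fun x => Cplus (g lo x) (zsum (lo+1) n (fun i => g i x)))).
    2:{ intros; apply zsum_S_l. }
    rewrite CRInt_plus, IHn; auto. apply CC_zsum; auto.
Qed.

Lemma CRInt_per (h : R -> C) a : (forall x, Ccont h x) -> (forall x, h (x+1) = h x) ->
  CRInt h a (a+1) = CRInt h 0 1.
Proof.
  intros Hc Hp. assert (E : forall u v, @ex_RInt C_R_NormedModule h u v) by (intros; apply ex_RInt_C; intros ? ?; auto).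
  rewrite <- (@RInt_Chasles C_R_CompleteNormedModule h a 0 (a+1)) by auto.
  rewrite <- (@RInt_Chasles C_R_CompleteNormedModule h 0 1 (a+1)) by auto.
  assert (S : CRInt h 1 (a+1) = CRInt h 0 a).
  { pose proof (@RInt_comp_lin C_R_CompleteNormedModule h 1 1 0 a) as L.
    replace (1*0+1) with 1 in L by ring. replace (1*a+1) with (a+1) in L by ring.
    rewrite <- L by auto. apply RInt_ext. intros x _. rewrite Rmult_1_l, Hp. replace 1 with (@one R_Ring) by reflexivity. apply (@scal_one R_Ring _ (h x)). }
  rewrite S. rewrite <- (@opp_RInt_swap C_R_CompleteNormedModule h 0 a) by auto.
  set (A := CRInt h 0 a). set (B := CRInt h 0 1). change (@eq C (Cplus (Copp A) (Cplus B A)) B). ring.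
Qed.

Lemma RInt_cos_per (m : Z) a : m <> 0%Z -> RInt (fun x => cos (2 * PI * (IZR m * x))) a (a+1) = 0.
Proof.
  intros Hm. assert (Hm' : IZR m <> 0) by (apply not_0_IZR; auto). pose proof PI_RGT_0.
  apply (@is_RInt_unique R_CompleteNormedModule).
  replace 0 with (minus (sin (2*PI*(IZR m*(a+1))) / (2*PI*IZR m)) (sin (2*PI*(IZR m*a)) / (2*PI*IZR m))).
  - apply (@is_RInt_derive R_CompleteNormedModule (fun x => sin (2*PI*(IZR m*x)) / (2*PI*IZR m))).
    + intros x _. evar (l : R). assert (D : is_derive (fun x => sin (2*PI*(IZR m*x)) / (2*PI*IZR m)) x l).
      { unfold l. auto_derive; auto. }
      replace (cos (2 * PI * (IZR m * x))) with l. exact D. unfold l. field. split; lra.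
    + intros x _. apply cdR. auto_derive. auto.
  - pose proof (e_per (IZR m * a) m) as P. unfold cexp2pi in P. injection P as P1 P2.
    replace (2*PI*(IZR m*(a+1))) with (2*PI*(IZR m*a + IZR m)) by ring. rewrite P2.
    unfold minus, plus, opp; simpl. ring.
Qed.

Lemma RInt_sin_per (m : Z) a : m <> 0%Z -> RInt (fun x => sin (2 * PI * (IZR m * x))) a (a+1) = 0.
Proof.
  intros Hm. assert (Hm' : IZR m <> 0) by (apply not_0_IZR; auto). pose proof PI_RGT_0.
  apply (@is_RInt_unique R_CompleteNormedModule).
  replace 0 with (minus (- cos (2*PI*(IZR m*(a+1))) / (2*PI*IZR m)) (- cos (2*PI*(IZR m*a)) / (2*PI*IZR m))).
  - apply (@is_RInt_derive R_CompleteNormedModule (fun x => - cos (2*PI*(IZR m*x)) / (2*PI*IZR m))).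
    + intros x _. evar (l : R). assert (D : is_derive (fun x => - cos (2*PI*(IZR m*x)) / (2*PI*IZR m)) x l).
      { unfold l. auto_derive; auto. }
      replace (sin (2 * PI * (IZR m * x))) with l. exact D. unfold l. field. split; lra.
    + intros x _. apply cdR. auto_derive. auto.
  - pose proof (e_per (IZR m * a) m) as P. unfold cexp2pi in P. injection P as P1 P2.
    replace (2*PI*(IZR m*(a+1))) with (2*PI*(IZR m*a + IZR m)) by ring. rewrite P1.
    unfold minus, plus, opp; simpl. ring.
Qed.

Lemma CC_e m b a a' : CC (fun x => cexp2pi (m * x + b)) a a'.
Proof. intros x _. apply Ccont_e. Qed.

Lemma ortho (m : Z) a : CRInt (fun x => cexp2pi (IZR m * x)) a (a+1) = if Z.eq_dec m 0 then RtoC 1 else RtoC 0.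
Proof.
  destruct (Z.eq_dec m 0) as [->|Hm].
  - rewrite (CRInt_ext _ (fun _ => RtoC 1)). rewrite CRInt_const. replace (a+1-a) with 1 by ring.
    change (@eq C (Cmult (RtoC 1) (RtoC 1)) (RtoC 1)). ring.
    intros x. rewrite Rmult_0_l. apply e_0.
  - rewrite CRInt_split. unfold cexp2pi; simpl. rewrite RInt_cos_per, RInt_sin_per by auto. reflexivity.
    intros x _. pose proof (Ccont_e (IZR m) 0 x) as H. 
    destruct H as [H1 H2]; split; [eapply continuous_ext; [|exact H1] | eapply continuous_ext; [|exact H2]]; intros y; simpl; rewrite Rplus_0_r; reflexivity.
Qed.

Lemma CRInt_norm_le f (g : R -> R) a b : a <= b -> CC f a b -> (forall x, a<=x<=b -> continuous g x) ->
  (forall x, a <= x <= b -> Cmod (f x) <= g x) -> Cmod (CRInt f a b) <= RInt g a b.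
Proof. intros Hab Hf Hg H.
  rewrite Cmod_norm.
  refine (@norm_RInt_le C_R_NormedModule f g a b (CRInt f a b) (RInt g a b) Hab _ _ _).
  - intros; rewrite <- Cmod_norm; apply H; auto.
  - apply (@RInt_correct C_R_CompleteNormedModule). apply ex_RInt_C; auto.
  - apply (@RInt_correct R_CompleteNormedModule). apply (@ex_RInt_continuous R_CompleteNormedModule).
    intros z Hz. rewrite Rmin_left, Rmax_right in Hz by auto. auto.
Qed.

Definition Dn (n : nat) (x : R) : C := zsum 0 n (fun j => cexp2pi (IZR j * x)).
Definition Fr (n : nat) (x : R) : R := Cmod (Dn n x) ^ 2 / INR n.
Definition FF (n : nat) (x : R) : C :=
  Cmult (RtoC (/ INR n)) (zsum 0 n (fun j => zsum 0 n (fun k => cexp2pi (IZR (j - k) * x)))).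

Lemma zsum_conj lo n g : Cconj (zsum lo n g) = zsum lo n (fun i => Cconj (g i)).
Proof. revert lo; induction n; intros lo. unfold zsum; simpl. apply injective_projections; simpl; ring.
  rewrite !zsum_S_l, Cplus_conj, IHn. reflexivity. Qed.

Lemma Fr_FF n x : RtoC (Fr n x) = FF n x.
Proof.
  unfold Fr, FF. unfold Rdiv. rewrite RtoC_mult, Cmod2_conj. unfold Dn.
  rewrite zsum_conj. rewrite <- zsum_mult_r.
  rewrite (Cmult_comm _ (RtoC (/ INR n))). f_equal. apply zsum_ext. intros j _.
  rewrite <- zsum_mult_l. apply zsum_ext. intros k _.
  rewrite <- e_neg, <- e_add. f_equal. rewrite minus_IZR. ring.
Qed.

Lemma Fr_ge0 n x : 0 <= Fr n x.
Proof. unfold Fr. destruct n. simpl. unfold Rdiv. rewrite Rinv_0. lra.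
  apply Rmult_le_pos. apply pow2_ge_0. apply Rlt_le, Rinv_0_lt_compat, lt_0_INR; lia. Qed.

Lemma Ccont_FF n x : Ccont (FF n) x.
Proof. unfold FF. apply Ccont_mult. apply Ccont_const. apply Ccont_zsum; intros j. apply Ccont_zsum; intros k.
  pose proof (Ccont_e (IZR (j - k)) 0 x) as [H1 H2]; split; [eapply continuous_ext; [|exact H1] | eapply continuous_ext; [|exact H2]];
  intros y; simpl; rewrite Rplus_0_r; reflexivity. Qed.

Lemma cont_Fr n x : continuous (Fr n) x.
Proof. destruct (Ccont_FF n x) as [H1 _]. eapply continuous_ext; [|exact H1].
  intros y. cbv beta. rewrite <- Fr_FF. reflexivity. Qed.

Lemma Cmod2 z : Cmod z ^ 2 = fst z ^ 2 + snd z ^ 2.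
Proof. unfold Cmod. apply pow2_sqrt. nra. Qed.

Lemma Cmod_e_m1 u : Cmod (Cminus (cexp2pi u) (RtoC 1)) ^ 2 = 4 * sin (PI * u) ^ 2.
Proof. rewrite Cmod2. unfold cexp2pi; simpl.
  replace (2 * PI * u) with (2 * (PI * u)) by ring. rewrite cos_2a_sin, sin_2a.
  pose proof (sin2_cos2 (PI * u)). unfold Rsqr in H. nra. Qed.

Lemma Dn_bound n u : sin (PI * u) <> 0 -> Cmod (Dn n u) ^ 2 * sin (PI * u) ^ 2 <= 1.
Proof.
  intros Hs. pose proof (geom_e n u) as G. fold (Dn n u) in G.
  assert (E : Cmod (Dn n u) ^ 2 * Cmod (Cminus (cexp2pi u) (RtoC 1)) ^ 2 =
              Cmod (Cminus (cexp2pi (INR n * u)) (RtoC 1)) ^ 2).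
  { rewrite <- G, Cmod_mult. ring. }
  rewrite Cmod_e_m1, Cmod_e_m1 in E.
  pose proof (pow2_ge_0 (sin (PI * (INR n * u)))). pose proof (SIN_bound (PI * (INR n * u))).
  nra.
Qed.

Lemma Fr_bound n u : (0 < n)%nat -> sin (PI * u) <> 0 -> Fr n u <= / (INR n * sin (PI * u) ^ 2).
Proof.
  intros Hn Hs. pose proof (Dn_bound n u Hs). unfold Fr.
  assert (0 < INR n) by (apply lt_0_INR; auto). assert (0 < sin (PI*u) ^ 2) by (apply pow2_gt_0 || (simpl; nra); auto).
  rewrite Rinv_mult. unfold Rdiv. rewrite (Rmult_comm (/ INR n) (/ _)).
  apply Rmult_le_compat_r. apply Rlt_le, Rinv_0_lt_compat; auto.
  apply Rmult_le_reg_r with (sin (PI * u) ^ 2); auto. rewrite Rinv_l by lra. lra.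
Qed.

Lemma CC_e0 m a b : CC (fun x => cexp2pi (m * x)) a b.
Proof. intros x _. pose proof (Ccont_e m 0 x) as [H1 H2]; split; [eapply continuous_ext; [|exact H1] | eapply continuous_ext; [|exact H2]];
  intros y; simpl; rewrite Rplus_0_r; reflexivity. Qed.

Lemma Ccont_e0 m x : Ccont (fun x => cexp2pi (m * x)) x.
Proof. apply (CC_e0 m x x x). split; [apply Rmin_l|apply Rmax_l]. Qed.

Lemma aux_inv n : INR n <> 0 -> Cmult (RtoC (/ INR n)) (Cmult (RtoC (INR n)) (RtoC 1)) = RtoC 1.
Proof. intros H. rewrite <- !RtoC_mult. f_equal. field. auto. Qed.

Lemma int_FF n a : (0 < n)%nat -> CRInt (fun u => FF n (- u)) a (a + 1) = RtoC 1.
Proof.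
  intros Hn. assert (HN : INR n <> 0) by (apply not_0_INR; lia).
  rewrite (CRInt_ext _ (fun u => Cmult (RtoC (/ INR n)) (zsum 0 n (fun j => zsum 0 n (fun k => cexp2pi (IZR (k - j) * u)))))).
  2:{ intros u. unfold FF. f_equal. apply zsum_ext; intros j _. apply zsum_ext; intros k _. f_equal.
      rewrite !minus_IZR. ring. }
  rewrite CRInt_Cmult_l. 2:{ apply CC_zsum; intros j. apply CC_zsum; intros k. apply CC_e0. }
  rewrite (CRInt_zsum 0 n (fun j u => zsum 0 n (fun k => cexp2pi (IZR (k - j) * u)))).
  2:{ intros j. apply CC_zsum; intros k. apply CC_e0. }
  rewrite (zsum_ext _ _ _ (fun _ => RtoC 1)).
  - rewrite zsum_const. apply aux_inv; auto.
  - intros j Hj. rewrite (CRInt_zsum 0 n (fun k u => cexp2pi (IZR (k - j) * u))).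
    2:{ intros k. apply CC_e0. }
    rewrite (zsum_delta 0 n j). 
    + rewrite ortho. destruct Z.eq_dec; [reflexivity|lia].
    + lia.
    + intros k Hk Hkj. rewrite ortho. destruct Z.eq_dec; [lia|reflexivity].
Qed.

Lemma sigma_coef (g : R -> C) x0 n : (forall x, Ccont g x) ->
  CRInt (fun y => Cmult (g y) (FF n (x0 - y))) 0 1 =
  Cmult (RtoC (/ INR n)) (zsum 0 n (fun j => zsum 0 n (fun k =>
     Cmult (cexp2pi (IZR (j - k) * x0)) (fhat g (j - k)%Z)))).
Proof.
  intros Hg.
  rewrite (CRInt_ext _ (fun y => Cmult (RtoC (/ INR n)) (zsum 0 n (fun j => zsum 0 n (fun k =>
     Cmult (cexp2pi (IZR (j - k) * x0)) (Cmult (g y) (cexp2pi (- IZR (j - k) * y)))))))).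
  2:{ intros y. unfold FF.
      rewrite (zsum_ext _ _ (fun j => zsum 0 n (fun k => Cmult (cexp2pi (IZR (j - k) * x0)) (Cmult (g y) (cexp2pi (- IZR (j - k) * y)))))
                (fun j => Cmult (g y) (zsum 0 n (fun k => cexp2pi (IZR (j - k) * (x0 - y)))))).
      - rewrite zsum_mult_l. ring.
      - intros j _. rewrite <- zsum_mult_l. apply zsum_ext; intros k _.
        replace (IZR (j - k) * (x0 - y)) with (IZR (j - k) * x0 + - IZR (j - k) * y) by ring.
        rewrite e_add. ring. }
  assert (CCt : forall j k, CC (fun y => Cmult (cexp2pi (IZR (j - k) * x0)) (Cmult (g y) (cexp2pi (- IZR (j - k) * y)))) 0 1).
  { intros j k. apply CC_mult. apply CC_const. apply CC_mult. intros x _; auto. apply CC_e0. }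
  rewrite CRInt_Cmult_l. 2:{ apply CC_zsum; intros j. apply CC_zsum; intros k. auto. }
  f_equal.
  rewrite (CRInt_zsum 0 n (fun j y => zsum 0 n (fun k => Cmult (cexp2pi (IZR (j - k) * x0)) (Cmult (g y) (cexp2pi (- IZR (j - k) * y)))))).
  2:{ intros j. apply CC_zsum; intros k. auto. }
  apply zsum_ext; intros j _.
  rewrite (CRInt_zsum 0 n (fun k y => Cmult (cexp2pi (IZR (j - k) * x0)) (Cmult (g y) (cexp2pi (- IZR (j - k) * y))))).
  2:{ intros k. auto. }
  apply zsum_ext; intros k _.
  rewrite CRInt_Cmult_l. reflexivity. apply CC_mult. intros x _; auto. apply CC_e0.
Qed.

Lemma Dn_per n x z : Dn n (x + IZR z) = Dn n x.
Proof. unfold Dn. apply zsum_ext; intros j _. replace (IZR j * (x + IZR z)) with (IZR j * x + IZR (j * z)) by (rewrite mult_IZR; ring).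
  apply e_per. Qed.

Lemma Fr_per n x z : Fr n (x + IZR z) = Fr n x.
Proof. unfold Fr. rewrite Dn_per. reflexivity. Qed.

Lemma Ccont_Fr_lin n a b x : Ccont (fun y => RtoC (Fr n (a * y + b))) x.
Proof. split; simpl.
  - apply (continuous_comp (fun y => a * y + b) (Fr n)). apply cdR; auto_derive; auto. apply cont_Fr.
  - apply continuous_const. Qed.

Lemma CRInt_minus f g a b : CC f a b -> CC g a b ->
  CRInt (fun x => Cminus (f x) (g x)) a b = Cminus (CRInt f a b) (CRInt g a b).
Proof. intros F G. rewrite !CRInt_split; auto. 2: apply CC_minus; auto.
  unfold Cminus, Cplus, Copp; simpl. f_equal.
  - apply (@RInt_minus R_CompleteNormedModule (fun x => fst (f x)) (fun x => fst (g x))); apply ex_RInt_fst; auto.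
  - apply (@RInt_minus R_CompleteNormedModule (fun x => snd (f x)) (fun x => snd (g x))); apply ex_RInt_snd; auto.
Qed.

Lemma sin_sq_ge u d : 0 < d <= Rabs u -> Rabs u <= 1/2 -> sin (PI * d) ^ 2 <= sin (PI * u) ^ 2.
Proof. intros Hd Hu. pose proof PI_RGT_0.
  assert (E : sin (PI * u) ^ 2 = sin (PI * Rabs u) ^ 2).
  { destruct (Rle_dec 0 u). rewrite Rabs_pos_eq; auto. rewrite Rabs_left by lra.
    replace (PI * - u) with (- (PI * u)) by ring. rewrite sin_neg. ring. }
  rewrite E.
  assert (0 <= sin (PI * d)). { apply sin_ge_0; nra. }
  assert (sin (PI * d) <= sin (PI * Rabs u)). { apply sin_incr_1; nra. }
  nra.
Qed.

Lemma fejer_bound (g : R -> C) x0 n eps delta M :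
  (forall x, Ccont g x) -> (forall x, g (x+1) = g x) -> (0 < n)%nat -> 0 < delta <= 1/2 -> 0 <= eps ->
  (forall u, Rabs u < delta -> Cmod (Cminus (g x0) (g (u + x0))) <= eps) ->
  (forall u, -1/2 <= u <= 1/2 -> Cmod (g (u + x0)) <= M) ->
  Cmod (Cminus (g x0) (CRInt (fun y => Cmult (g y) (RtoC (Fr n (x0 - y)))) 0 1))
    <= eps + 2 * M / (INR n * sin (PI * delta) ^ 2).
Proof.
  intros Hg Hp Hn Hd He Hcont HM.
  set (h := fun y => Cmult (g y) (RtoC (Fr n (x0 - y)))).
  assert (Hh : forall x, Ccont h x).
  { intros x. apply Ccont_mult; auto.
    pose proof (Ccont_Fr_lin n (-1) x0 x) as [H1 H2]. split; [eapply continuous_ext; [|exact H1] | eapply continuous_ext; [|exact H2]];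
    intros y; simpl; try reflexivity; f_equal; ring. }
  assert (Hhp : forall x, h (x + 1) = h x).
  { intros x. unfold h. rewrite Hp. f_equal. f_equal. replace (x0 - (x + 1)) with ((x0 - x) + IZR (-1)) by (simpl; ring).
    apply Fr_per. }
  fold h.
  rewrite <- (CRInt_per h (x0 - 1/2)) by auto.
  assert (S2 : CRInt h (x0 - 1/2) (x0 - 1/2 + 1) = CRInt (fun u => Cmult (g (u + x0)) (RtoC (Fr n (- u)))) (-1/2) (1/2)).
  { pose proof (@RInt_comp_lin C_R_CompleteNormedModule h 1 x0 (-1/2) (1/2)) as L.
    assert (E1 : 1 * (-1/2) + x0 = x0 - 1/2) by field. assert (E2 : 1 * (1/2) + x0 = x0 - 1/2 + 1) by field.
    rewrite E1, E2 in L.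
    rewrite <- L. 2:{ apply ex_RInt_C. intros ? ?; auto. }
    apply RInt_ext. intros x _. rewrite Rmult_1_l. transitivity (h (x + x0)).
    { replace 1 with (@one R_Ring) by reflexivity. apply (@scal_one R_Ring _ (h (x + x0))). }
    unfold h. replace (x0 - (x + x0)) with (- x) by ring. reflexivity. }
  rewrite S2.
  assert (CCF : CC (fun u => RtoC (Fr n (- u))) (-1/2) (1/2)).
  { intros x _. pose proof (Ccont_Fr_lin n (-1) 0 x) as [H1 H2]. split; [eapply continuous_ext; [|exact H1] | eapply continuous_ext; [|exact H2]];
    intros y; simpl; try reflexivity; f_equal; ring. }
  assert (IF : CRInt (fun u => RtoC (Fr n (- u))) (-1/2) (1/2) = RtoC 1).
  { rewrite (CRInt_ext _ (fun u => FF n (- u))). replace (1/2) with (-1/2 + 1) by field. apply int_FF; auto.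
    intros; apply Fr_FF. }
  assert (G0 : g x0 = CRInt (fun u => Cmult (g x0) (RtoC (Fr n (- u)))) (-1/2) (1/2)).
  { rewrite CRInt_Cmult_l by auto. rewrite IF. symmetry. apply Cmult_1_r. }
  assert (CCg : CC (fun u => g (u + x0)) (-1/2) (1/2)).
  { intros x _. pose proof (Ccont_comp_lin g 1 x0 x) as Hc. 
    destruct Hc as [H1 H2]. rewrite Rmult_1_l; auto.
    split; [eapply continuous_ext; [|exact H1] | eapply continuous_ext; [|exact H2]]; intros y; simpl; rewrite Rmult_1_l; reflexivity. }
  rewrite G0 at 1. rewrite <- CRInt_minus.
  2:{ apply CC_mult; auto. apply CC_const. }
  2:{ apply CC_mult; auto. }
  rewrite (CRInt_ext _ (fun u => Cmult (Cminus (g x0) (g (u + x0))) (RtoC (Fr n (- u))))).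
  2:{ intros; unfold Cminus; ring. }
  set (K := 2 * M / (INR n * sin (PI * delta) ^ 2)).
  assert (HM0 : 0 <= M). { pose proof (HM 0). pose proof (Cmod_ge_0 (g (0 + x0))). apply Rle_trans with (Cmod (g (0 + x0))); auto. apply H; lra. }
  assert (Hs : 0 < sin (PI * delta)). { pose proof PI_RGT_0. apply sin_gt_0; nra. }
  assert (HnR : 0 < INR n) by (apply lt_0_INR; auto).
  assert (HK : 0 <= K). { unfold K. apply Rmult_le_pos. lra. apply Rlt_le, Rinv_0_lt_compat. apply Rmult_lt_0_compat; auto. apply pow_lt; auto. }
  eapply Rle_trans.
  apply (CRInt_norm_le _ (fun u => eps * Fr n (- u) + K * 1)).
  - lra.
  - apply CC_mult; auto. apply CC_minus; auto. apply CC_const.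
  - intros x _. apply cpR; [apply cmR|]; try apply continuous_const.
    apply (continuous_comp (fun u => - u) (Fr n)). apply cdR; auto_derive; auto. apply cont_Fr.
  - intros u Hu. rewrite Cmod_mult, Cmod_R, Rabs_pos_eq by apply Fr_ge0.
    pose proof (Fr_ge0 n (- u)).
    destruct (Rlt_dec (Rabs u) delta) as [Hl|Hl].
    + pose proof (Hcont u Hl). nra.
    + assert (Hb : Cmod (Cminus (g x0) (g (u + x0))) <= 2 * M).
      { unfold Cminus. eapply Rle_trans. apply Cmod_triangle. rewrite Cmod_opp.
        replace (g x0) with (g (0 + x0)) by (f_equal; ring). assert (H0 : -1/2 <= 0 <= 1/2) by lra.
        pose proof (HM 0 H0) as A1. pose proof (HM u Hu) as A2. lra. }
      assert (Hsin : sin (PI * delta) ^ 2 <= sin (PI * - u) ^ 2).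
      { apply sin_sq_ge. rewrite Rabs_Ropp. lra. rewrite Rabs_Ropp. apply Rabs_le; lra. }
      assert (Hsp : 0 < sin (PI * delta) ^ 2) by (apply pow_lt; auto).
      assert (HF : Fr n (- u) <= / (INR n * sin (PI * delta) ^ 2)).
      { eapply Rle_trans. apply Fr_bound; auto. intros Z. rewrite Z in Hsin. simpl in Hsin. lra.
        apply Rinv_le_contravar. apply Rmult_lt_0_compat; auto. apply Rmult_le_compat_l; lra. }
      assert (Cmod (Cminus (g x0) (g (u + x0))) * Fr n (- u) <= K).
      { unfold K. unfold Rdiv. apply Rmult_le_compat; auto. apply Cmod_ge_0. }
      nra.
  - rewrite RInt_lin2.
    + assert (RF : RInt (fun u => Fr n (- u)) (-1/2) (1/2) = 1).
      { rewrite CRInt_split in IF by auto. injection IF as IF1 _. exact IF1. }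
      rewrite RF, RInt_constR. lra.
    + apply ex_RInt_fst in CCF. exact CCF.
    + apply (@ex_RInt_const R_CompleteNormedModule).
Qed.

Lemma Cmod_le_sum z : Cmod z <= Rabs (fst z) + Rabs (snd z).
Proof. destruct z as [a b]. assert (E : (a, b) = Cplus (RtoC a) (0, b)) by (unfold Cplus, RtoC; simpl; f_equal; ring).
  rewrite E at 1.
  eapply Rle_trans. apply Cmod_triangle. rewrite Cmod_R. simpl.
  apply Rplus_le_compat_l. unfold Cmod; simpl. replace (0 * (0 * 1) + b * (b * 1)) with (Rsqr b) by (unfold Rsqr; ring).
  rewrite sqrt_Rsqr_abs. lra. Qed.

Lemma cont_eps (f : R -> R) x eps : continuous f x -> 0 < eps ->
  exists d, 0 < d /\ forall y, Rabs (y - x) < d -> Rabs (f y - f x) < eps.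
Proof. intros H He. apply continuity_pt_filterlim in H.
  unfold continuity_pt, continue_in, limit1_in, limit_in in H. simpl in H. unfold R_dist in H.
  destruct (H eps He) as [d [Hd Hy]]. exists d. split; auto.
  intros y Hy'. destruct (Req_dec y x) as [->|Hne]. rewrite Rminus_eq_0, Rabs_R0; auto.
  apply Hy. split; auto. unfold D_x, no_cond. split; auto. Qed.

Lemma bound_R (f : R -> R) a b : a <= b -> (forall x, continuous f x) -> exists M, forall x, a <= x <= b -> Rabs (f x) <= M.
Proof. intros Hab Hc. destruct (continuity_ab_maj (fun x => Rabs (f x)) a b Hab) as [Mx [HM _]].
  intros c _. apply continuity_pt_filterlim. apply continuous_Rabs_comp. auto.
  exists (Rabs (f Mx)). auto. Qed.

Definition sigm (g : R -> C) (x0 : R) (n : nat) : C := CRInt (fun y => Cmult (g y) (RtoC (Fr n (x0 - y)))) 0 1.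

Lemma fejer_lim (g : R -> C) x0 : (forall x, Ccont g x) -> (forall x, g (x+1) = g x) ->
  forall eps, 0 < eps -> exists N0, forall n, (N0 <= n)%nat -> (0 < n)%nat -> Cmod (Cminus (g x0) (sigm g x0 n)) <= eps.
Proof.
  intros Hg Hp eps He.
  destruct (Hg x0) as [C1 C2].
  destruct (cont_eps _ _ (eps/4) C1) as [d1 [Hd1 H1]]. lra.
  destruct (cont_eps _ _ (eps/4) C2) as [d2 [Hd2 H2]]. lra.
  assert (Cf : forall x, continuous (fun u => fst (g (u + x0))) x).
  { intros x. destruct (Ccont_comp_lin g 1 x0 x) as [A _]. rewrite Rmult_1_l; apply Hg.
    eapply continuous_ext; [|exact A]. intros y; simpl; rewrite Rmult_1_l; reflexivity. }
  assert (Cs : forall x, continuous (fun u => snd (g (u + x0))) x).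
  { intros x. destruct (Ccont_comp_lin g 1 x0 x) as [_ A]. rewrite Rmult_1_l; apply Hg.
    eapply continuous_ext; [|exact A]. intros y; simpl; rewrite Rmult_1_l; reflexivity. }
  destruct (bound_R _ (-1/2) (1/2) ltac:(lra) Cf) as [M1 HM1].
  destruct (bound_R _ (-1/2) (1/2) ltac:(lra) Cs) as [M2 HM2].
  set (M := M1 + M2).
  set (delta := Rmin (Rmin d1 d2) (1/2)).
  assert (Hdel : 0 < delta <= 1/2).
  { unfold delta. split. apply Rmin_pos. apply Rmin_pos; auto. lra. apply Rmin_r. }
  assert (Hs : 0 < sin (PI * delta)). { pose proof PI_RGT_0. apply sin_gt_0; nra. }
  assert (Hs2 : 0 < sin (PI * delta) ^ 2) by (apply pow_lt; auto).
  assert (HM0 : 0 <= M). { unfold M. assert (H0 : -1/2 <= 0 <= 1/2) by lra. pose proof (HM1 0 H0). pose proof (HM2 0 H0).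
    pose proof (Rabs_pos (fst (g (0 + x0)))). pose proof (Rabs_pos (snd (g (0 + x0)))). lra. }
  destruct (INR_unbounded (4 * M / (eps * sin (PI * delta) ^ 2))) as [N0 HN0].
  exists N0. intros n Hn Hn0.
  eapply Rle_trans. apply (fejer_bound g x0 n (eps/2) delta M); auto; try lra.
  - intros u Hu. eapply Rle_trans. apply Cmod_le_sum. simpl.
    assert (Hu1 : Rabs (u + x0 - x0) < d1). { replace (u + x0 - x0) with u by ring. eapply Rlt_le_trans; eauto. unfold delta.
      eapply Rle_trans; [apply Rmin_l|apply Rmin_l]. }
    assert (Hu2 : Rabs (u + x0 - x0) < d2). { replace (u + x0 - x0) with u by ring. eapply Rlt_le_trans; eauto. unfold delta.
      eapply Rle_trans; [apply Rmin_l|apply Rmin_r]. }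
    specialize (H1 _ Hu1). specialize (H2 _ Hu2).
    rewrite Rabs_minus_sym in H1. rewrite Rabs_minus_sym in H2.
    replace (fst (g x0) + - fst (g (u + x0))) with (fst (g x0) - fst (g (u + x0))) by ring.
    replace (snd (g x0) + - snd (g (u + x0))) with (snd (g x0) - snd (g (u + x0))) by ring. lra.
  - intros u Hu. eapply Rle_trans. apply Cmod_le_sum. unfold M. pose proof (HM1 u Hu). pose proof (HM2 u Hu). lra.
  - assert (HnR : INR N0 <= INR n) by (apply le_INR; auto).
    assert (HnP : 0 < INR n) by (apply lt_0_INR; auto).
    assert (2 * M / (INR n * sin (PI * delta) ^ 2) <= eps / 2).
    { unfold Rdiv. apply Rmult_le_reg_r with (INR n * sin (PI * delta) ^ 2). apply Rmult_lt_0_compat; auto.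
      rewrite Rmult_assoc, Rinv_l by (apply Rgt_not_eq, Rmult_lt_0_compat; auto). rewrite Rmult_1_r.
      assert (4 * M / (eps * sin (PI * delta) ^ 2) < INR n) by lra.
      unfold Rdiv in H. apply Rmult_lt_compat_r with (r := eps * sin (PI * delta) ^ 2) in H; [|apply Rmult_lt_0_compat; auto].
      rewrite Rmult_assoc, Rinv_l in H by (apply Rgt_not_eq, Rmult_lt_0_compat; auto). nra. }
    lra.
Qed.

Lemma Int_part_unique y z : IZR z <= y < IZR z + 1 -> Int_part y = z.
Proof. intros [H1 H2]. destruct (base_Int_part y) as [B1 B2].
  assert (IZR (Int_part y) < IZR z + 1) by lra. assert (IZR z < IZR (Int_part y) + 1) by lra.
  rewrite <- plus_IZR in *. apply lt_IZR in H. apply lt_IZR in H0. lia. Qed.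

Lemma frac_per y : frac_part (y + 1) = frac_part y.
Proof. unfold frac_part. destruct (base_Int_part y) as [B1 B2].
  rewrite (Int_part_unique (y + 1) (Int_part y + 1)). rewrite plus_IZR. ring.
  rewrite plus_IZR. lra. Qed.

Lemma frac_id y : 0 <= y < 1 -> frac_part y = y.
Proof. intros H. unfold frac_part. rewrite (Int_part_unique y 0). simpl. ring. simpl. lra. Qed.

Lemma per_per phi y : per phi (y + 1) = per phi y.
Proof. unfold per. rewrite frac_per. reflexivity. Qed.

Lemma within_eps (phi : R -> C) p eps :
  filterlim phi (within (fun y => 0 <= y <= 1) (locally p)) (locally (phi p)) -> 0 < eps ->
  exists d, 0 < d /\ forall y, 0 <= y <= 1 -> Rabs (y - p) < d ->
     Rabs (fst (phi y) - fst (phi p)) < eps /\ Rabs (snd (phi y) - snd (phi p)) < eps.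
Proof. intros H He. 
  assert (L : locally (phi p) (ball (phi p) (mkposreal eps He))) by apply locally_ball.
  specialize (H _ L). destruct H as [d Hd]. exists d. split. apply cond_pos.
  intros y Hy Hyp. specialize (Hd y Hyp Hy). destruct Hd as [A B]. split; [exact A|exact B]. Qed.

Lemma cont_from_eps (f : R -> R) x : (forall eps, 0 < eps -> exists d, 0 < d /\ forall y, Rabs (y - x) < d -> Rabs (f y - f x) < eps) ->
  continuous f x.
Proof. intros H. apply continuity_pt_filterlim. intros eps He. destruct (H eps He) as [d [Hd Hy]].
  exists d. split; auto. intros y [_ Hy']. apply Hy. exact Hy'. Qed.

Lemma per_cont (phi : R -> C)
  (Hphi_cont : forall x, 0 <= x <= 1 ->
     filterlim phi (within (fun y => 0 <= y <= 1) (locally x)) (locally (phi x)))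
  (H01 : phi 0 = phi 1) x : Ccont (per phi) x.
Proof.
  assert (Main : forall eps, 0 < eps -> exists d, 0 < d /\ forall y, Rabs (y - x) < d ->
     Rabs (fst (per phi y) - fst (per phi x)) < eps /\ Rabs (snd (per phi y) - snd (per phi x)) < eps).
  { intros eps He. unfold per.
    set (z := Int_part x). destruct (base_Int_part x) as [B1 B2]. fold z in B1, B2.
    set (p := frac_part x). assert (Hp : p = x - IZR z) by reflexivity.
    destruct (Req_dec p 0) as [P0|P0].
    - destruct (within_eps phi 0 eps (Hphi_cont 0 ltac:(lra)) He) as [d0 [Hd0 H0]].
      destruct (within_eps phi 1 eps (Hphi_cont 1 ltac:(lra)) He) as [d1 [Hd1 H1]].
      exists (Rmin (Rmin d0 d1) (1/2)). split. apply Rmin_pos. apply Rmin_pos; auto. lra.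
      intros y Hy. pose proof (Rmin_l (Rmin d0 d1) (1/2)). pose proof (Rmin_r (Rmin d0 d1) (1/2)).
      pose proof (Rmin_l d0 d1). pose proof (Rmin_r d0 d1).
      fold p. rewrite P0. apply Rabs_def2 in Hy. destruct (Rle_dec x y).
      + assert (E : frac_part y = y - x).
        { unfold frac_part. rewrite (Int_part_unique y z). lra. lra. }
        rewrite E. apply H0. lra. rewrite Rminus_0_r. apply Rabs_def1; lra.
      + assert (E : frac_part y = y - x + 1).
        { unfold frac_part. rewrite (Int_part_unique y (z - 1)). rewrite minus_IZR. lra. rewrite minus_IZR. lra. }
        rewrite E, H01. apply H1. lra. apply Rabs_def1; lra.
    - assert (Hp0 : 0 < p < 1). { split; [|lra]. destruct (Rle_lt_or_eq_dec 0 p); auto. lra. lra. }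
      destruct (within_eps phi p eps (Hphi_cont p ltac:(lra)) He) as [d0 [Hd0 H0]].
      exists (Rmin d0 (Rmin p (1 - p))). split. apply Rmin_pos; auto. apply Rmin_pos; lra.
      intros y Hy. pose proof (Rmin_l d0 (Rmin p (1 - p))). pose proof (Rmin_r d0 (Rmin p (1 - p))).
      pose proof (Rmin_l p (1 - p)). pose proof (Rmin_r p (1 - p)). apply Rabs_def2 in Hy.
      assert (E : frac_part y = y - IZR z).
      { unfold frac_part. rewrite (Int_part_unique y z). lra. lra. }
      rewrite E. fold p. apply H0. lra. apply Rabs_def1; lra. }
  split; apply cont_from_eps; intros eps He; destruct (Main eps He) as [d [Hd Hy]]; exists d; split; auto;
    intros y Hy'; apply Hy; auto.
Qed.

Lemma fhat_per phi k : fhat (per phi) k = fhat phi k.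
Proof. unfold fhat. apply (@RInt_ext C_R_CompleteNormedModule). intros x Hx. rewrite Rmin_left, Rmax_right in Hx by lra.
  unfold per. rewrite frac_id by lra. reflexivity. Qed.

Lemma fst_le_Cmod z : Rabs (fst z) <= Cmod z.
Proof. pose proof (Rmax_Cmod z). pose proof (Rmax_l (Rabs (fst z)) (Rabs (snd z))). lra. Qed.
Lemma snd_le_Cmod z : Rabs (snd z) <= Cmod z.
Proof. pose proof (Rmax_Cmod z). pose proof (Rmax_r (Rabs (fst z)) (Rabs (snd z))). lra. Qed.

Lemma fold_zsum lo m (r : Z -> R) :
  fold_right Rplus 0 (map (fun i => r (lo + Z.of_nat i)%Z) (seq 0 m)) = fst (zsum lo m (fun l => RtoC (r l))).
Proof. unfold zsum. generalize (seq 0 m). induction l; simpl. reflexivity. rewrite IHl. reflexivity. Qed.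

Lemma partZ_S g n : partZ g (S n) = Cplus (Cplus (g (- Z.of_nat (S n))%Z) (partZ g n)) (g (Z.of_nat (S n))).
Proof. unfold partZ. replace (2 * S n + 1)%nat with (S (S (2 * n + 1))) by lia.
  rewrite zsum_S_l, zsum_S_r. replace (- Z.of_nat (S n) + 1)%Z with (- Z.of_nat n)%Z by lia.
  replace (- Z.of_nat n + Z.of_nat (2 * n + 1))%Z with (Z.of_nat (S n)) by lia. ring. Qed.

Definition Tn (a : Z -> C) (n : nat) : R := fst (partZ (fun l => RtoC (Cmod (a l))) n).

Lemma Tn_S a n : Tn a (S n) = Tn a n + Cmod (a (- Z.of_nat (S n))%Z) + Cmod (a (Z.of_nat (S n))).
Proof. unfold Tn. rewrite partZ_S. simpl. ring. Qed.

Lemma partZ_cauchy a n m : (n <= m)%nat -> Cmod (Cminus (partZ a m) (partZ a n)) <= Tn a m - Tn a n.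
Proof. intros H. induction H.
  - unfold Cminus. rewrite Cplus_opp_r, Cmod_0. lra.
  - rewrite partZ_S, Tn_S.
    replace (Cminus (Cplus (Cplus (a (- Z.of_nat (S m))%Z) (partZ a m)) (a (Z.of_nat (S m)))) (partZ a n))
      with (Cplus (Cplus (Cminus (partZ a m) (partZ a n)) (a (- Z.of_nat (S m))%Z)) (a (Z.of_nat (S m)))) by ring.
    eapply Rle_trans. apply Cmod_triangle. eapply Rle_trans. apply Rplus_le_compat_r. apply Cmod_triangle. lra.
Qed.

Lemma ell1_conv (a : Z -> C) : ell1 a ->
  exists L : C, is_lim_seq (fun n => fst (partZ a n)) (fst L) /\ is_lim_seq (fun n => snd (partZ a n)) (snd L).
Proof.
  intros [M HM].
  assert (HT : forall n, Tn a n <= M).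
  { intros n. specialize (HM n). rewrite (fold_zsum (- Z.of_nat n) (2 * n + 1) (fun l => Cmod (a l))) in HM. exact HM. }
  assert (Hg : Un_growing (Tn a)).
  { intros n. rewrite Tn_S. pose proof (Cmod_ge_0 (a (- Z.of_nat (S n))%Z)). pose proof (Cmod_ge_0 (a (Z.of_nat (S n)))). lra. }
  assert (Hub : has_ub (Tn a)). { exists M. intros x [n ->]. auto. }
  destruct (growing_cv _ Hg Hub) as [lT HlT].
  assert (CT : Cauchy_crit (Tn a)) by (apply CV_Cauchy; exists lT; auto).
  assert (Hmono : forall n m, (n <= m)%nat -> Tn a n <= Tn a m).
  { intros n m H. induction H. lra. specialize (Hg m). lra. }
  assert (Key : forall (pr : C -> R), (forall z, Rabs (pr z) <= Cmod z) -> (forall z w, pr (Cminus z w) = pr z - pr w) ->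
     exists l, Un_cv (fun n => pr (partZ a n)) l).
  { intros pr Hpr Hlin.
    assert (Cc : Cauchy_crit (fun n => pr (partZ a n))).
    { intros eps He. destruct (CT eps He) as [N HN]. exists N. intros n m Hn Hm.
      unfold Rdist. destruct (le_ge_dec n m) as [Hnm|Hnm].
      - rewrite Rabs_minus_sym, <- Hlin. eapply Rle_lt_trans. apply Hpr. eapply Rle_lt_trans. apply partZ_cauchy; auto.
        specialize (HN m n Hm Hn). unfold Rdist in HN. pose proof (Hmono n m Hnm). rewrite Rabs_pos_eq in HN; lra.
      - rewrite <- Hlin. eapply Rle_lt_trans. apply Hpr. eapply Rle_lt_trans. apply partZ_cauchy; auto.
        specialize (HN n m Hn Hm). unfold Rdist in HN. pose proof (Hmono m n Hnm). rewrite Rabs_pos_eq in HN; lra. }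
    destruct (Rcomplete.R_complete _ Cc) as [l Hl]. exists l; auto. }
  destruct (Key fst fst_le_Cmod) as [l1 H1]. { intros; reflexivity. }
  destruct (Key snd snd_le_Cmod) as [l2 H2]. { intros; reflexivity. }
  exists (l1, l2). split; apply is_lim_seq_Reals; auto.
Qed.

Lemma sumZ_eq (g : Z -> C) (L : C) : is_lim_seq (fun n => fst (partZ g n)) (fst L) ->
  is_lim_seq (fun n => snd (partZ g n)) (snd L) -> sumZ g = L.
Proof. intros H1 H2. unfold sumZ. rewrite (is_lim_seq_unique _ _ H1), (is_lim_seq_unique _ _ H2). simpl.
  destruct L; reflexivity. Qed.

Lemma sigma_eq g x0 n : (forall x, Ccont g x) -> sigm g x0 n =
  Cmult (RtoC (/ INR n)) (zsum 0 n (fun j => zsum 0 n (fun k =>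
     Cmult (cexp2pi (IZR (j - k) * x0)) (fhat g (j - k)%Z)))).
Proof. intros Hg. unfold sigm. rewrite <- sigma_coef by auto. apply CRInt_ext. intros y. rewrite Fr_FF. reflexivity. Qed.

Lemma fhat_unique g1 g2 : (forall x, Ccont g1 x) -> (forall x, g1 (x+1) = g1 x) ->
  (forall x, Ccont g2 x) -> (forall x, g2 (x+1) = g2 x) -> (forall k, fhat g1 k = fhat g2 k) -> forall x, g1 x = g2 x.
Proof.
  intros C1 P1 C2 P2 Hk x.
  assert (Hs : forall n, sigm g1 x n = sigm g2 x n).
  { intros n. rewrite !sigma_eq by auto. f_equal. apply zsum_ext; intros j _. apply zsum_ext; intros k _. rewrite Hk. reflexivity. }
  destruct (Ceq_dec (Cminus (g1 x) (g2 x)) (RtoC 0)) as [E|E].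
  - replace (g1 x) with (Cplus (Cminus (g1 x) (g2 x)) (g2 x)) by ring. rewrite E. ring.
  - exfalso. apply Cmod_gt_0 in E. set (d := Cmod (Cminus (g1 x) (g2 x))) in *.
    destruct (fejer_lim g1 x C1 P1 (d/4)) as [N1 H1]. lra.
    destruct (fejer_lim g2 x C2 P2 (d/4)) as [N2 H2]. lra.
    specialize (H1 (S (N1 + N2)) ltac:(lia) ltac:(lia)). specialize (H2 (S (N1 + N2)) ltac:(lia) ltac:(lia)).
    rewrite <- Hs in H2.
    assert (d <= Cmod (Cminus (g1 x) (sigm g1 x (S (N1 + N2)))) + Cmod (Cminus (g2 x) (sigm g1 x (S (N1 + N2))))).
    { unfold d. replace (Cminus (g1 x) (g2 x)) with (Cplus (Cminus (g1 x) (sigm g1 x (S (N1 + N2)))) (Copp (Cminus (g2 x) (sigm g1 x (S (N1 + N2)))))) by ring.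
      eapply Rle_trans. apply Cmod_triangle. rewrite Cmod_opp. lra. }
    lra.
Qed.

Lemma double_sum (a : Z -> C) n :
  zsum 0 n (fun j => zsum 0 n (fun k => a (j - k)%Z)) = zsum 0 n (fun p => partZ a (Z.to_nat p)).
Proof.
  induction n.
  - reflexivity.
  - rewrite zsum_S_r. rewrite (zsum_S_r 0 n (fun p => partZ a (Z.to_nat p))). rewrite <- IHn.
    rewrite (zsum_ext 0 n _ (fun j => Cplus (zsum 0 n (fun k => a (j - k)%Z)) (a (j - Z.of_nat n)%Z))).
    2:{ intros j _. rewrite zsum_S_r. f_equal. }
    rewrite zsum_plus.
    replace (Z.to_nat (0 + Z.of_nat n)) with n by lia.
    unfold partZ. replace (2 * n + 1)%nat with (n + S n)%nat by lia. rewrite zsum_split.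
    replace (- Z.of_nat n + Z.of_nat n)%Z with 0%Z by lia.
    replace (zsum (- Z.of_nat n) n a) with (zsum 0 n (fun i => a (i - Z.of_nat n)%Z)).
    2:{ transitivity (zsum (0 + - Z.of_nat n) n a). rewrite <- zsum_shift. apply zsum_ext; intros; f_equal; lia. f_equal. }
    replace (zsum 0 (S n) a) with (zsum 0 (S n) (fun k => a (0 + Z.of_nat n - k)%Z)).
    2:{ rewrite (zsum_refl 0 (S n) (0 + Z.of_nat n) a). f_equal. lia. }
    ring.
Qed.

Lemma zsum_fst (G : nat -> C) m : fst (zsum 0 (S m) (fun p => G (Z.to_nat p))) = sum_f_R0 (fun p => fst (G p)) m.
Proof. induction m. rewrite zsum_S_l, zsum_0. simpl. ring.
  rewrite zsum_S_r. simpl sum_f_R0. rewrite <- IHm. simpl fst at 1. f_equal. f_equal. f_equal. lia. Qed.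
Lemma zsum_snd (G : nat -> C) m : snd (zsum 0 (S m) (fun p => G (Z.to_nat p))) = sum_f_R0 (fun p => snd (G p)) m.
Proof. induction m. rewrite zsum_S_l, zsum_0. simpl. ring.
  rewrite zsum_S_r. simpl sum_f_R0. rewrite <- IHm. simpl snd at 1. f_equal. f_equal. f_equal. lia. Qed.

Lemma fst_RtoC_mult r z : fst (Cmult (RtoC r) z) = r * fst z.
Proof. unfold Cmult, RtoC; simpl. ring. Qed.
Lemma snd_RtoC_mult r z : snd (Cmult (RtoC r) z) = r * snd z.
Proof. unfold Cmult, RtoC; simpl. ring. Qed.

Lemma phi_total (phi : R -> C)
  (Hphi_cont : forall x, 0 <= x <= 1 ->
     filterlim phi (within (fun y => 0 <= y <= 1) (locally x)) (locally (phi x)))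
  (Hphi0 : phi 0 = RtoC 1) (Hphi1 : phi 1 = RtoC 1)
  (Hphi_l1 : ell1 (fhat phi)) :
  exists L : C, is_lim_seq (fun n => fst (partZ (fhat phi) n)) (fst L) /\ is_lim_seq (fun n => snd (partZ (fhat phi) n)) (snd L)
   /\ L = RtoC 1.
Proof.
  destruct (ell1_conv _ Hphi_l1) as [L [HL1 HL2]]. exists L. split; auto. split; auto.
  set (a := fhat phi).
  assert (Cg : forall x, Ccont (per phi) x) by (apply per_cont; auto; rewrite Hphi0, Hphi1; auto).
  assert (Pg : forall x, per phi (x + 1) = per phi x) by apply per_per.
  assert (P0 : per phi 0 = RtoC 1). { unfold per. rewrite frac_id by lra. auto. }
  assert (Sg : forall m, sigm (per phi) 0 (S m) = Cmult (RtoC (/ INR (S m))) (zsum 0 (S m) (fun p => partZ a (Z.to_nat p)))).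
  { intros m. rewrite sigma_eq by auto. f_equal. rewrite <- double_sum. apply zsum_ext; intros j _. apply zsum_ext; intros k _.
    rewrite Rmult_0_r, e_0, fhat_per. unfold a. ring. }
  assert (Fj : forall (pr : C -> R) (v : R), (forall z, Rabs (pr z) <= Cmod z) -> (forall z w, pr (Cminus z w) = pr z - pr w) ->
     pr (per phi 0) = v -> (forall m, pr (sigm (per phi) 0 (S m)) = sum_f_R0 (fun p => pr (partZ a p)) m / INR (S m)) ->
     Un_cv (fun n => pr (partZ a n)) (pr L) -> pr L = v).
  { intros pr v Hpr Hlin Hv Hsig HL.
    pose proof (Cesaro_1 _ _ HL) as Ces.
    apply (UL_sequence (fun n => sum_f_R0 (fun p => pr (partZ a p)) (Init.Nat.pred n) / INR n)); auto.
    intros eps He. destruct (fejer_lim (per phi) 0 Cg Pg (eps/2)) as [N0 HN0]. lra.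
    exists (S N0). intros n Hn. destruct n as [|m]. lia. simpl Init.Nat.pred. rewrite <- Hsig.
    unfold R_dist. rewrite <- Hv, Rabs_minus_sym, <- Hlin. eapply Rle_lt_trans. apply Hpr. eapply Rle_lt_trans.
    apply HN0; lia. lra. }
  apply injective_projections.
  - apply (Fj fst (fst (RtoC 1)) fst_le_Cmod).
    + intros; reflexivity.
    + rewrite P0; reflexivity.
    + intros m. rewrite Sg, fst_RtoC_mult, <- zsum_fst. unfold Rdiv. ring.
    + apply is_lim_seq_Reals; auto.
  - apply (Fj snd (snd (RtoC 1)) snd_le_Cmod).
    + intros; reflexivity.
    + rewrite P0; reflexivity.
    + intros m. rewrite Sg, snd_RtoC_mult, <- zsum_snd. unfold Rdiv. ring.
    + apply is_lim_seq_Reals; auto.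
Qed.

Lemma zsum_minus lo n g h : zsum lo n (fun i => Cminus (g i) (h i)) = Cminus (zsum lo n g) (zsum lo n h).
Proof. unfold Cminus. rewrite zsum_plus, zsum_opp. reflexivity. Qed.

Lemma zsum_swap lo1 n1 lo2 n2 (F : Z -> Z -> C) :
  zsum lo1 n1 (fun j => zsum lo2 n2 (fun b => F j b)) = zsum lo2 n2 (fun b => zsum lo1 n1 (fun j => F j b)).
Proof. revert lo1; induction n1; intros lo1.
  - rewrite zsum_0. symmetry. apply zsum_zero. intros; apply zsum_0.
  - rewrite zsum_S_l, IHn1. rewrite <- zsum_plus. apply zsum_ext. intros; rewrite zsum_S_l; reflexivity. Qed.

Lemma mu_alt N phi k : mu N phi k = zsum (k - Z.of_nat N + 1)%Z (2 * N) (fhat phi).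
Proof. unfold mu. rewrite zsum_refl. f_equal. lia. Qed.

Lemma partZ_nu N phi k n : (Z.abs k + Z.of_nat N <= Z.of_nat n)%Z ->
  partZ (fun l => if inBb N (k - l)%Z then RtoC 0 else fhat phi l) n = Cminus (partZ (fhat phi) n) (mu N phi k).
Proof.
  intros Hn. unfold partZ.
  rewrite (zsum_ext _ _ _ (fun l => Cminus (fhat phi l) (if inBb N (k - l)%Z then fhat phi l else RtoC 0))).
  2:{ intros i _. destruct (inBb N (k - i)); ring. }
  rewrite zsum_minus. f_equal. rewrite mu_alt.
  rewrite (zsum_support _ _ (k - Z.of_nat N + 1)%Z (2 * N)).
  - apply zsum_ext. intros i Hi. unfold inBb.
    destruct (Z.leb_spec (- Z.of_nat N) (k - i)), (Z.ltb_spec (k - i) (Z.of_nat N)); simpl; try reflexivity; lia.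
  - lia.
  - lia.
  - intros i _ Hi. unfold inBb.
    destruct (Z.leb_spec (- Z.of_nat N) (k - i)), (Z.ltb_spec (k - i) (Z.of_nat N)); simpl; try reflexivity; lia.
Qed.

Lemma nu_eq N phi k (L : C) :
  is_lim_seq (fun n => fst (partZ (fhat phi) n)) (fst L) -> is_lim_seq (fun n => snd (partZ (fhat phi) n)) (snd L) ->
  nu N phi k = Cminus L (mu N phi k).
Proof.
  intros H1 H2. unfold nu. apply sumZ_eq.
  - eapply is_lim_seq_ext_loc. 2: apply (is_lim_seq_minus' _ _ _ _ H1 (is_lim_seq_const (fst (mu N phi k)))).
    exists (Z.to_nat (Z.abs k + Z.of_nat N)). intros n Hn. rewrite partZ_nu by lia. reflexivity.
  - eapply is_lim_seq_ext_loc. 2: apply (is_lim_seq_minus' _ _ _ _ H2 (is_lim_seq_const (snd (mu N phi k)))).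
    exists (Z.to_nat (Z.abs k + Z.of_nat N)). intros n Hn. rewrite partZ_nu by lia. reflexivity.
Qed.

Lemma ortho01 m : CRInt (fun x => cexp2pi (IZR m * x)) 0 1 = if Z.eq_dec m 0 then RtoC 1 else RtoC 0.
Proof. pose proof (ortho m 0) as H. rewrite Rplus_0_l in H. exact H. Qed.

Lemma Ccont_e0' m x : Ccont (fun y => cexp2pi (m * y)) x.
Proof. apply Ccont_e0. Qed.

Lemma band_repr (f : R -> C) mm : (forall x, continuous f x) -> (forall x, f (x+1) = f x) ->
  (forall k, ~ inB mm k -> fhat f k = RtoC 0) ->
  forall t, f t = zsum (- Z.of_nat mm) (2 * mm) (fun b => Cmult (fhat f b) (cexp2pi (IZR b * t))).
Proof.
  intros Hc Hp Hb. apply fhat_unique.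
  - intros; apply Ccont_of_cont; auto.
  - auto.
  - intros x. apply Ccont_zsum. intros b. apply Ccont_mult. apply Ccont_const. apply Ccont_e0'.
  - intros x. apply zsum_ext. intros b _. f_equal. replace (IZR b * (x + 1)) with (IZR b * x + IZR b) by ring. apply e_per.
  - intros k. unfold fhat at 2.
    rewrite (CRInt_ext _ (fun x => zsum (- Z.of_nat mm) (2 * mm) (fun b => Cmult (fhat f b) (cexp2pi (IZR (b - k) * x))))).
    2:{ intros x. rewrite <- zsum_mult_r. apply zsum_ext. intros b _. rewrite <- Cmult_assoc, <- e_add.
        f_equal. f_equal. rewrite minus_IZR. ring. }
    rewrite (CRInt_zsum _ _ (fun b x => Cmult (fhat f b) (cexp2pi (IZR (b - k) * x)))).
    2:{ intros b. apply CC_mult. apply CC_const. apply CC_e0. }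
    rewrite (zsum_ext _ _ _ (fun b => if Z.eq_dec b k then fhat f k else RtoC 0)).
    2:{ intros b _. rewrite CRInt_Cmult_l by apply CC_e0. rewrite ortho01.
        destruct (Z.eq_dec (b - k) 0), (Z.eq_dec b k); try lia. subst. ring. ring. }
    destruct (Z_le_gt_dec (- Z.of_nat mm) k) as [H1|H1]; [destruct (Z_lt_ge_dec k (Z.of_nat mm)) as [H2|H2]|].
    + rewrite (zsum_delta _ _ k). destruct Z.eq_dec; [reflexivity|lia]. lia.
      intros i _ Hi. destruct Z.eq_dec; [lia|reflexivity].
    + rewrite Hb. symmetry. apply zsum_zero. intros i Hi. destruct Z.eq_dec; reflexivity. unfold inB; lia.
    + rewrite Hb. symmetry. apply zsum_zero. intros i Hi. destruct Z.eq_dec; reflexivity. unfold inB; lia.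
Qed.

Lemma shift_int h t : (forall x, Ccont h x) -> (forall x, h (x+1) = h x) -> CRInt (fun x => h (x - t)) 0 1 = CRInt h 0 1.
Proof.
  intros Hc Hp. rewrite <- (CRInt_per h (- t)) by auto.
  pose proof (@RInt_comp_lin C_R_CompleteNormedModule h 1 (- t) 0 1) as L.
  assert (E1 : 1 * 0 + - t = - t) by ring. assert (E2 : 1 * 1 + - t = - t + 1) by ring.
  rewrite E1, E2 in L. rewrite <- L. 2:{ apply ex_RInt_C. intros ? ?; auto. }
  apply RInt_ext. intros x _. rewrite Rmult_1_l. transitivity (h (x + - t)).
  { reflexivity. }
  replace 1 with (@one R_Ring) by reflexivity. symmetry. apply (@scal_one R_Ring _ (h (x + - t))).
Qed.

Lemma Ccont_sN N x : Ccont (sN N) x.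
Proof. unfold sN. apply Ccont_mult. apply Ccont_const. apply Ccont_zsum. intros; apply Ccont_e0'. Qed.

Lemma sN_per N x : sN N (x + 1) = sN N x.
Proof. unfold sN. f_equal. apply zsum_ext. intros b _. replace (IZR b * (x + 1)) with (IZR b * x + IZR b) by ring. apply e_per. Qed.

Lemma Gk_int N phi k : (forall x, Ccont (per phi) x) ->
  CRInt (fun y => Cmult (Cmult (sN N y) (per phi y)) (cexp2pi (- IZR k * y))) 0 1 = Cmult (RtoC (/ (2 * INR N))) (mu N phi k).
Proof.
  intros Hc.
  rewrite (CRInt_ext _ (fun y => Cmult (RtoC (/ (2 * INR N))) (zsum (- Z.of_nat N) (2 * N) (fun b => Cmult (per phi y) (cexp2pi (- IZR (k - b) * y)))))).
  2:{ intros y. unfold sN.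
      transitivity (Cmult (RtoC (/ (2 * INR N))) (Cmult (zsum (- Z.of_nat N) (2 * N) (fun k0 : Z => cexp2pi (IZR k0 * y))) (Cmult (per phi y) (cexp2pi (- IZR k * y))))).
      ring. f_equal. rewrite <- zsum_mult_r. apply zsum_ext. intros b _.
      replace (- IZR (k - b) * y) with (IZR b * y + - IZR k * y) by (rewrite minus_IZR; ring). rewrite e_add. ring. }
  rewrite CRInt_Cmult_l. 2:{ apply CC_zsum. intros b. apply CC_mult. intros x _; auto. apply CC_e0. }
  f_equal. rewrite (CRInt_zsum _ _ (fun b y => Cmult (per phi y) (cexp2pi (- IZR (k - b) * y)))).
  2:{ intros b. apply CC_mult. intros x _; auto. apply CC_e0. }
  unfold mu. apply zsum_ext. intros b _. rewrite <- fhat_per. reflexivity.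
Qed.

Lemma fhat_Rphi N phi (f : R -> C) k : (0 < N)%nat -> (forall x, Ccont (per phi) x) ->
  fhat (Rphi N phi f) k = Cmult (Cmult (RtoC (/ (2 * INR N))) (mu N phi k))
     (zsum 0 (2 * N) (fun j => Cmult (f (IZR j / (2 * INR N))) (cexp2pi (- IZR k * (IZR j / (2 * INR N)))))).
Proof.
  intros HN Hc.
  set (Gk := fun y => Cmult (Cmult (sN N y) (per phi y)) (cexp2pi (- IZR k * y))).
  assert (CG : forall x, Ccont Gk x). { intros x. unfold Gk. apply Ccont_mult. apply Ccont_mult; auto. apply Ccont_sN. apply Ccont_e0'. }
  assert (PG : forall x, Gk (x + 1) = Gk x).
  { intros x. unfold Gk. rewrite sN_per, per_per. f_equal. replace (- IZR k * (x + 1)) with (- IZR k * x + IZR (- k)) by (rewrite opp_IZR; ring).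
    apply e_per. }
  unfold fhat.
  rewrite (CRInt_ext _ (fun x => zsum 0 (2 * N) (fun j => Cmult (Cmult (f (IZR j / (2 * INR N))) (cexp2pi (- IZR k * (IZR j / (2 * INR N)))))
                                                        (Gk (x - IZR j / (2 * INR N)))))).
  2:{ intros x. unfold Rphi. rewrite <- zsum_mult_r. apply zsum_ext. intros j _. cbv zeta. unfold Gk.
      replace (- IZR k * x) with (- IZR k * (x - IZR j / (2 * INR N)) + - IZR k * (IZR j / (2 * INR N))) by ring.
      rewrite e_add. ring. }
  rewrite (CRInt_zsum _ _ (fun j x => Cmult (Cmult (f (IZR j / (2 * INR N))) (cexp2pi (- IZR k * (IZR j / (2 * INR N)))))
                                                        (Gk (x - IZR j / (2 * INR N))))).
  2:{ intros j. apply CC_mult. apply CC_const. intros x _. 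
      destruct (Ccont_comp_lin Gk 1 (- (IZR j / (2 * INR N))) x (CG _)) as [A1 A2].
      split; [eapply continuous_ext; [|exact A1] | eapply continuous_ext; [|exact A2]]; intros y; cbv beta; replace (1 * y + - (IZR j / (2 * INR N))) with (y - IZR j / (2 * INR N)) by ring; reflexivity. }
  rewrite <- zsum_mult_l. apply zsum_ext. intros j _.
  rewrite CRInt_Cmult_l.
  2:{ intros x _. destruct (Ccont_comp_lin Gk 1 (- (IZR j / (2 * INR N))) x (CG _)) as [A1 A2].
      split; [eapply continuous_ext; [|exact A1] | eapply continuous_ext; [|exact A2]]; intros y; cbv beta; replace (1 * y + - (IZR j / (2 * INR N))) with (y - IZR j / (2 * INR N)) by ring; reflexivity. }
  rewrite shift_int by auto. unfold Gk. rewrite Gk_int by auto. apply Cmult_comm.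
Qed.

Lemma modz_iff a n : (0 < n)%Z -> (a mod n = 0)%Z <-> exists q, a = (q * n)%Z.
Proof. intros H. rewrite Z.mod_divide by lia. split; intros [q Hq]; exists q; auto. Qed.

Lemma nondiv mm N b b' : (mm <= N)%nat -> (0 < N)%nat -> inB mm b -> inB mm b' ->
  ((b - b') mod (2 * Z.of_nat N) = 0)%Z -> b = b'.
Proof. intros H1 H2 Hb Hb' Hm. apply modz_iff in Hm; [|lia]. destruct Hm as [q Hq]. unfold inB in *.
  assert (q = 0%Z) by nia. subst. lia. Qed.

Lemma S_eq (f : R -> C) mm N k : (0 < N)%nat ->
  (forall t, f t = zsum (- Z.of_nat mm) (2 * mm) (fun b => Cmult (fhat f b) (cexp2pi (IZR b * t)))) ->
  zsum 0 (2 * N) (fun j => Cmult (f (IZR j / (2 * INR N))) (cexp2pi (- IZR k * (IZR j / (2 * INR N))))) =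
  zsum (- Z.of_nat mm) (2 * mm) (fun b => Cmult (fhat f b)
     (if Z.eq_dec ((b - k) mod (2 * Z.of_nat N)) 0 then RtoC (2 * INR N) else RtoC 0)).
Proof.
  intros HN Hrep.
  rewrite (zsum_ext _ _ _ (fun j => zsum (- Z.of_nat mm) (2 * mm) (fun b => Cmult (fhat f b) (cexp2pi (IZR (b - k) * (IZR j / (2 * INR N))))))).
  2:{ intros j _. rewrite Hrep. rewrite <- zsum_mult_r. apply zsum_ext. intros b _. rewrite <- Cmult_assoc, <- e_add.
      f_equal. f_equal. rewrite minus_IZR. ring. }
  rewrite zsum_swap. apply zsum_ext. intros b _. rewrite zsum_mult_l. f_equal. apply geom_sum. auto.
Qed.

Theorem lemma4p1 (phi : R -> C) (m mm N : nat) (f : nat -> R -> C)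
  (* phi : [0,1] -> C continuous *)
  (Hphi_cont : forall x, 0 <= x <= 1 ->
     filterlim phi (within (fun y => 0 <= y <= 1) (locally x)) (locally (phi x)))
  (Hphi0 : phi 0 = RtoC 1) (Hphi1 : phi 1 = RtoC 1)
  (Hphi_l1 : ell1 (fhat phi))
  (HN : (mm <= N)%nat)
  (* f = (f_0, ..., f_{m-1}) in L^2([0,1]; C^m), mm-Fourier bandlimited,
     identified with its continuous 1-periodic representative *)
  (Hf_cont : forall i, (i < m)%nat -> forall x, continuous (f i) x)
  (Hf_per : forall i, (i < m)%nat -> forall x, f i (x + 1) = f i x)
  (Hf_band : forall i, (i < m)%nat -> forall k, ~ inB mm k -> fhat (f i) k = RtoC 0) :
  forall i, (i < m)%nat -> forall k : Z,
    let d := Cminus (fhat (f i) k) (fhat (Rphi N phi (f i)) k) in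
    (inB mm k -> d = Cmult (fhat (f i) k) (nu N phi k)) /\
    (forall l : Z, l <> 0%Z -> inB mm (k - 2 * l * Z.of_nat N)%Z ->
        d = Copp (Cmult (fhat (f i) (k - 2 * l * Z.of_nat N)%Z) (mu N phi k))) /\
    (~ inB mm k -> (forall l : Z, l <> 0%Z -> ~ inB mm (k - 2 * l * Z.of_nat N)%Z) ->
        d = RtoC 0).
Proof.
  intros i Hi k d.
  specialize (Hf_cont i Hi). specialize (Hf_per i Hi). specialize (Hf_band i Hi).
  set (g := f i) in *.
  destruct N as [|N'].
  - assert (mm = 0%nat) by lia. subst mm.
    assert (NB : forall z, ~ inB 0 z) by (intros z; unfold inB; lia).
    split; [intros H; exfalso; apply (NB k); auto|]. split; [intros l _ H; exfalso; eapply NB; eauto|].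
    intros _ _. unfold d. rewrite Hf_band by apply NB.
    unfold fhat. rewrite (CRInt_ext _ (fun _ => RtoC 0)).
    + rewrite CRInt_const. apply injective_projections; simpl; ring.
    + intros x. unfold Rphi. simpl (2 * 0)%nat. rewrite zsum_0. ring.
  - set (N := S N') in *. assert (HN0 : (0 < N)%nat) by (unfold N; lia).
    assert (Cper : forall x, Ccont (per phi) x) by (apply per_cont; auto; rewrite Hphi0, Hphi1; auto).
    pose proof (band_repr g mm Hf_cont Hf_per Hf_band) as Hrep.
    assert (Hd : d = Cminus (fhat g k) (Cmult (Cmult (RtoC (/ (2 * INR N))) (mu N phi k))
         (zsum (- Z.of_nat mm) (2 * mm) (fun b => Cmult (fhat g b)
            (if Z.eq_dec ((b - k) mod (2 * Z.of_nat N)) 0 then RtoC (2 * INR N) else RtoC 0))))).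
    { unfold d. rewrite fhat_Rphi by auto. rewrite (S_eq g mm N k) by auto. reflexivity. }
    assert (INv : forall z, Cmult (Cmult (RtoC (/ (2 * INR N))) (mu N phi k)) (Cmult z (RtoC (2 * INR N))) = Cmult z (mu N phi k)).
    { intros z. transitivity (Cmult (Cmult (RtoC (/ (2 * INR N))) (RtoC (2 * INR N))) (Cmult z (mu N phi k))). ring.
      rewrite <- RtoC_mult, Rinv_l. ring. apply Rgt_not_eq. apply Rmult_lt_0_compat. lra. apply lt_0_INR; auto. }
    split; [|split].
    + intros Hk. rewrite Hd.
      rewrite (zsum_delta _ _ k).
      * destruct Z.eq_dec as [_|E]. 2:{ exfalso; apply E. rewrite Z.sub_diag. apply Z.mod_0_l. lia. }
        rewrite INv.
        destruct (phi_total phi Hphi_cont Hphi0 Hphi1 Hphi_l1) as [L [HL1 [HL2 HL]]].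
        rewrite (nu_eq N phi k L HL1 HL2), HL. ring.
      * unfold inB in Hk; lia.
      * intros b Hb Hbk. destruct Z.eq_dec as [E|_]. exfalso. apply Hbk. apply (nondiv mm N b k HN HN0); auto. unfold inB; lia. ring.
    + intros l Hl Hb0. set (b0 := (k - 2 * l * Z.of_nat N)%Z) in *.
      assert (Hk : ~ inB mm k).
      { intros Hk. assert (k = b0). { apply (nondiv mm N k b0 HN HN0); auto. apply modz_iff. lia. exists l. unfold b0. ring. }
        unfold b0 in H. assert (l * Z.of_nat N = 0)%Z by lia. apply Z.mul_eq_0 in H0. lia. }
      rewrite Hd, Hf_band by auto.
      rewrite (zsum_delta _ _ b0).
      * destruct Z.eq_dec as [_|E]. 2:{ exfalso; apply E. apply modz_iff. lia. exists (- l)%Z. unfold b0. ring. }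
        rewrite INv. ring.
      * unfold inB in Hb0; lia.
      * intros b Hb Hbk. destruct Z.eq_dec as [E|_]. 2: ring. exfalso. apply Hbk.
        apply (nondiv mm N b b0 HN HN0); auto. unfold inB; lia. apply modz_iff in E; [|lia]. destruct E as [q Hq].
        apply modz_iff. lia. exists (q + l)%Z. unfold b0. lia.
    + intros Hk Hl. rewrite Hd, Hf_band by auto.
      rewrite zsum_zero. ring.
      intros b Hb. destruct Z.eq_dec as [E|_]. 2: ring. exfalso.
      apply modz_iff in E; [|lia]. destruct E as [q Hq].
      destruct (Z.eq_dec q 0) as [->|Hq0].
      * apply Hk. replace k with b by lia. unfold inB; lia.
      * apply (Hl (- q)%Z). lia. replace (k - 2 * - q * Z.of_nat N)%Z with b by lia. unfold inB; lia.
Qed.
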